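(* Let $F$ be an algebraically closed field of characteristic $\neq 2$, $R=F[t]$ with the involution ${}^*$ described in the context, and let $A\in M_2(R)$ satisfy $A^*=-A$, $\det(A)\neq 0$ and $\gcd(A)=1$. Then $A$ is congruent to a matrix with zero diagonal, i.e. there is $S\in\mathrm{GL}_2(R)$ such that both diagonal entries of $S^*AS$ are $0$.
   Context: $R=F[t]$ is the polynomial ring over $F$, and ${}^*$ is the $F$-algebra involution of $R$ that is the identity on $F$ and sends $t$ to $-t$. For $A=(a_{ij})\in M_n(R)$, $A^*$ is the matrix whose $(i,j)$ entry is $a_{ji}^*$. $A$ is skew-hermitian if $A^*=-A$. Congruence: $B=S^*AS$ for some $S\in\mathrm{GL}_n(R)$. $\gcd(A)$ denotes the monic generator (or $0$) of the ideal of $R$ generated by all entries of $A$. *)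

(* Defs.v *)
From mathcomp Require Import all_boot all_algebra.
Set Implicit Arguments. Unset Strict Implicit. Unset Printing Implicit Defensive.
Import GRing.Theory.
Local Open Scope ring_scope.

Definition polyinv (F : fieldType) (p : {poly F}) : {poly F} := p \Po (- 'X).

Definition mxstar (F : fieldType) (m n : nat) (A : 'M[{poly F}]_(m, n))
  : 'M[{poly F}]_(n, m) := map_mx (@polyinv F) A^T.

Definition skew_hermitian (F : fieldType) (n : nat) (A : 'M[{poly F}]_n) : Prop :=
  mxstar A = - A.

(* gcd(A): the monic generator (or 0) of the ideal generated by all entries. *)
Definition gcd_mx (F : fieldType) (m n : nat) (A : 'M[{poly F}]_(m, n)) : {poly F} :=
  let g := \big[@gcdp F/0]_(i < m) \big[@gcdp F/0]_(j < n) A i j in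
  (lead_coef g)^-1 *: g.

(* Main.v *)
Require Import Defs.
From mathcomp Require Import all_boot all_algebra.
From mathcomp Require Import ring zify.
Set Implicit Arguments. Unset Strict Implicit. Unset Printing Implicit Defensive.
Import GRing.Theory.
Local Open Scope ring_scope.


Lemma pinvE (F : fieldType) (p : {poly F}) : polyinv p = comp_poly (-'X) p.
Proof. by []. Qed.
Lemma pinvD (F : fieldType) (p q : {poly F}) : polyinv (p + q) = polyinv p + polyinv q.
Proof. exact: comp_polyD. Qed.
Lemma pinvM (F : fieldType) (p q : {poly F}) : polyinv (p * q) = polyinv p * polyinv q.
Proof. exact: comp_polyM. Qed.
Lemma pinvN (F : fieldType) (p : {poly F}) : polyinv (- p) = - polyinv p.
Proof. by rewrite pinvE raddfN. Qed.
Lemma pinvB (F : fieldType) (p q : {poly F}) : polyinv (p - q) = polyinv p - polyinv q.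
Proof. by rewrite pinvD pinvN. Qed.
Lemma pinvC (F : fieldType) (c : F) : polyinv c%:P = c%:P.
Proof. exact: comp_polyC. Qed.
Lemma pinv1 (F : fieldType) : polyinv (1 : {poly F}) = 1.
Proof. exact: comp_polyC. Qed.
Lemma pinv0 (F : fieldType) : polyinv (0 : {poly F}) = 0.
Proof. exact: comp_poly0. Qed.
Lemma pinvX (F : fieldType) : polyinv ('X : {poly F}) = - 'X.
Proof. exact: comp_polyX. Qed.
Lemma pinvK (F : fieldType) (p : {poly F}) : polyinv (polyinv p) = p.
Proof. by rewrite /polyinv -comp_polyA raddfN /= comp_polyX opprK comp_polyXr. Qed.
Lemma pinv_horner (F : fieldType) (p : {poly F}) x : (polyinv p).[x] = p.[- x].
Proof. by rewrite /polyinv horner_comp hornerN hornerX. Qed.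
Lemma size_pinv (F : fieldType) (p : {poly F}) : size (polyinv p) = size p.
Proof. by rewrite /polyinv size_comp_poly2 // size_opp size_polyX. Qed.
Lemma pinv_eq0 (F : fieldType) (p : {poly F}) : (polyinv p == 0) = (p == 0).
Proof. by rewrite -!size_poly_eq0 size_pinv. Qed.
Lemma pinvZ (F : fieldType) (c : F) (p : {poly F}) : polyinv (c *: p) = c *: polyinv p.
Proof. exact: comp_polyZ. Qed.

Definition pinvE' := (pinvD, pinvM, pinvN, pinvC, pinv1, pinv0, pinvK, pinvZ).

Lemma coprimep_pinv (F : fieldType) (p q : {poly F}) :
  coprimep p q -> coprimep (polyinv p) (polyinv q).
Proof.
case/Bezout_eq1_coprimepP => [[u v]] /= H.
apply/Bezout_eq1_coprimepP; exists (polyinv u, polyinv v) => /=.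
by rewrite -!pinvM -pinvD H pinv1.
Qed.

Lemma mxstarE (F : fieldType) m n (A : 'M[{poly F}]_(m, n)) :
  mxstar A = map_mx (comp_poly (-'X)) A^T.
Proof. by []. Qed.

Lemma mxstarM (F : fieldType) m n p (A : 'M[{poly F}]_(m, n)) (B : 'M[{poly F}]_(n, p)) :
  mxstar (A *m B) = mxstar B *m mxstar A.
Proof. by rewrite !mxstarE trmx_mul map_mxM. Qed.

Lemma mxstarK (F : fieldType) m n (A : 'M[{poly F}]_(m, n)) : mxstar (mxstar A) = A.
Proof.
apply/matrixP => i j; rewrite /mxstar !mxE; exact: pinvK.
Qed.

Lemma mxstarN (F : fieldType) m n (A : 'M[{poly F}]_(m, n)) : mxstar (- A) = - mxstar A.
Proof. apply/matrixP => i j; rewrite /mxstar !mxE; exact: pinvN. Qed.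

Lemma det_mxstar (F : fieldType) n (A : 'M[{poly F}]_n) : \det (mxstar A) = polyinv (\det A).
Proof. by rewrite mxstarE det_map_mx det_tr. Qed.

Definition cong (F : fieldType) (A B : 'M[{poly F}]_2) :=
  exists S, S \in unitmx /\ B = mxstar S *m A *m S.

Lemma cong_trans (F : fieldType) (A B C : 'M[{poly F}]_2) : cong A B -> cong B C -> cong A C.
Proof.
move=> [S [uS ->]] [T [uT ->]]; exists (S *m T); split; first by rewrite unitmx_mul uS.
by rewrite mxstarM !mulmxA.
Qed.

Lemma skew_cong (F : fieldType) (A S : 'M[{poly F}]_2) :
  skew_hermitian A -> skew_hermitian (mxstar S *m A *m S).
Proof.
rewrite /skew_hermitian => H; rewrite !mxstarM mxstarK H.
by rewrite mulNmx mulmxN mulmxA.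
Qed.
Definition M2 (R : Type) (p q r s : R) : 'M[R]_2 :=
  \matrix_(i < 2, j < 2) if (i : nat) == 0%N then (if (j : nat) == 0%N then p else q)
                         else (if (j : nat) == 0%N then r else s).

Lemma M2_00 (R : Type) (p q r s : R) : M2 p q r s ord0 ord0 = p. Proof. by rewrite mxE. Qed.
Lemma M2_01 (R : Type) (p q r s : R) : M2 p q r s ord0 ord_max = q. Proof. by rewrite mxE. Qed.
Lemma M2_10 (R : Type) (p q r s : R) : M2 p q r s ord_max ord0 = r. Proof. by rewrite mxE. Qed.
Lemma M2_11 (R : Type) (p q r s : R) : M2 p q r s ord_max ord_max = s. Proof. by rewrite mxE. Qed.
Definition M2E := (M2_00, M2_01, M2_10, M2_11).

Lemma M2_eta (R : Type) (A : 'M[R]_2) :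
  A = M2 (A ord0 ord0) (A ord0 ord_max) (A ord_max ord0) (A ord_max ord_max).
Proof.
apply/matrixP => i j; rewrite mxE.
case: i => [[|[|i]] Hi] //; case: j => [[|[|j]] Hj] //=; congr (A _ _); exact: val_inj.
Qed.
Lemma det_M2 (R : comNzRingType) (p q r s : R) : \det (M2 p q r s) = p * s - q * r.
Proof.
rewrite (expand_det_row _ ord0) big_ord_recl big_ord1.
rewrite /cofactor !det_mx11.
rewrite !mxE /= expr0 expr1 mul1r mulN1r. ring.
Qed.
Lemma mulM2 (R : comNzRingType) (p q r s p' q' r' s' : R) :
  M2 p q r s *m M2 p' q' r' s' = M2 (p * p' + q * r') (p * q' + q * s') (r * p' + s * r') (r * q' + s * s').
Proof.
apply/matrixP => i j; rewrite !mxE big_ord_recl big_ord1 !mxE /=.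
by case: i => [[|[|i]] Hi] //; case: j => [[|[|j]] Hj].
Qed.

Lemma skewE (F : fieldType) (A : 'M[{poly F}]_2) :
  skew_hermitian A -> forall i j, polyinv (A j i) = - A i j.
Proof.
move=> H i j; have := congr1 (fun M : 'M_2 => M i j) H.
by rewrite /mxstar !mxE.
Qed.

Lemma mxstarM2 (F : fieldType) (p q r s : {poly F}) :
  mxstar (M2 p q r s) = M2 (polyinv p) (polyinv r) (polyinv q) (polyinv s).
Proof.
apply/matrixP => i j; rewrite /mxstar !mxE.
by case: i => [[|[|i]] Hi] //; case: j => [[|[|j]] Hj].
Qed.

Lemma half_poly (F : fieldType) : (2%:R : F) != 0 ->
  ((2%:R : F)^-1)%:P * 2%:R = 1 :> {poly F}.
Proof. by move=> H2; rewrite -polyC_natr -polyCM mulVf. Qed.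

Lemma final_step (F : fieldType) (A : 'M[{poly F}]_2) :
  (2%:R : F) != 0 -> skew_hermitian A -> A ord0 ord0 = 0 ->
  coprimep (A ord0 ord_max) (polyinv (A ord0 ord_max)) ->
  exists S : 'M[{poly F}]_2,
    S \in unitmx /\
    (mxstar S *m A *m S) ord0 ord0 = 0 /\ (mxstar S *m A *m S) ord_max ord_max = 0.
Proof.
move=> H2 Hs H00 /Bezout_eq1_coprimepP [[s t] /= Hst].
have H10 := skewE Hs ord0 ord_max.
have H11 := skewE Hs ord_max ord_max.
rewrite [A]M2_eta H00 in H10 H11 *.
move: H10 H11; rewrite !M2E.
set b := A ord0 ord_max; set d := A ord_max ord_max; set b' := A ord_max ord0.
move=> H10 H11.
have Hst' := congr1 (@polyinv F) Hst; rewrite pinvD !pinvM pinv1 pinvK in Hst'.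
pose h := ((2%:R : F)^-1)%:P.
pose P := - d * s; pose Q := - d * t.
pose z := h * (P - polyinv Q).
exists (M2 1 (polyinv z) 0 1); split.
  by rewrite unitmxE det_M2 mulr1 mulr0 subr0 unitr1.
rewrite mxstarM2 !mulM2 !M2E; split; first by ring.
have Hb' : b' = - polyinv b by rewrite -pinvN -H10 pinvK.
have Hd : polyinv d = - d by rewrite H11.
rewrite Hb' /z /P /Q !pinvE' ?Hd ?pinvK.
transitivity (h * (- d * (s * b + t * polyinv b) - d * (polyinv s * polyinv b + polyinv t * b)) + d).
  ring.
rewrite Hst Hst'; transitivity (d * (1 - h * 2%:R)); first by ring.
by rewrite half_poly // subrr mulr0.
Qed.

Lemma two_neq0 (F : fieldType) (x : F) : (2%:R : F) != 0 -> x != 0 -> x + x != 0.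
Proof. by move=> H2 Hx; rewrite -mulr2n -mulr_natl mulf_neq0. Qed.

Lemma coprimep_const (F : fieldType) (c : F) (q : {poly F}) : c != 0 -> coprimep c%:P q.
Proof.
move=> Hc; apply/Bezout_eq1_coprimepP; exists ((c^-1)%:P, 0) => /=.
by rewrite mul0r addr0 -polyCM mulVf.
Qed.

Lemma pinv_XsubC (F : fieldType) (b : F) :
  polyinv ('X - b%:P) = (-1) *: ('X - (- b)%:P).
Proof. by rewrite pinvB pinvX pinvC polyCN scaleN1r opprB; ring. Qed.

Lemma halving (F : closedFieldType) (D : {poly F}) :
  (2%:R : F) != 0 -> polyinv D = D -> D.[0] != 0 ->
  exists u, u * polyinv u = D /\ coprimep u (polyinv u).
Proof.
move=> H2; move: {2}(size D) (leqnn (size D)) => n; elim: n D => [|n IH] D.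
  by rewrite leqn0 size_poly_eq0 => /eqP -> _; rewrite horner0 eqxx.
move=> Hsz HD HD0.
have [/closed_rootP [a Ha] | /negPn s1] := boolP (size D != 1); last first.
  have HDc : D = (D`_0)%:P by apply: size1_polyC; rewrite (eqP s1).
  have Hc : D`_0 != 0 by rewrite -horner_coef0.
  have : size ('X^2 - (D`_0)%:P) != 1 by rewrite size_XnsubC.
  case/closed_rootP => e; rewrite rootE hornerD hornerN hornerXn hornerC subr_eq0 => /eqP He.
  have He0 : e != 0 by apply: contraNneq Hc => E; rewrite -He E expr0n.
  exists e%:P; rewrite pinvC -polyCM -expr2 He -HDc; split => //.
  exact: coprimep_const.
have a0 : a != 0 by apply: contraNneq HD0 => E; move: Ha; rewrite E.
have Hma : root D (- a) by rewrite -HD rootE pinv_horner opprK.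
case/factor_theorem: Ha => q Dq.
have Hq : root q (- a).
  move: Hma; rewrite Dq rootE hornerM hornerXsubC mulf_eq0 => /orP [] // E.
  by move: (two_neq0 H2 a0); rewrite -oppr_eq0 opprD (eqP E) eqxx.
case/factor_theorem: Hq => q1 Dq1.
have q10 : q1 != 0 by apply: contraNneq HD0 => E; rewrite Dq Dq1 E !mul0r horner0.
pose D1 := - q1.
pose K := ('X - (- a)%:P) * ('X - a%:P).
have K0 : K != 0 by rewrite mulf_neq0 // polyXsubC_eq0.
have DK : D = q1 * K by rewrite Dq Dq1 mulrA.
have HD1 : polyinv D1 = D1.
  rewrite /D1 pinvN; congr (- _); apply: (mulIf K0).
  have E : polyinv K = K.
    rewrite /K pinvM !pinv_XsubC opprK -scalerAl -scalerAr scalerA mulN1r opprK scale1r.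
    exact: mulrC.
  by rewrite -{1}E -pinvM -DK HD.
have HD10 : D1.[0] != 0.
  rewrite /D1 hornerN oppr_eq0; apply: contraNneq HD0 => E.
  by rewrite DK hornerM E mul0r.
have Xn (c : F) : 'X - c%:P != 0 by rewrite polyXsubC_eq0.
have q0 : q != 0 by rewrite Dq1 mulf_neq0.
have sq : size q = (size q1).+1 by rewrite Dq1 size_mul // size_XsubC addn2.
have sD : size D = (size q).+1 by rewrite Dq size_mul // size_XsubC addn2.
have Hsz1 : (size D1 <= n)%N.
  rewrite /D1 size_opp; move: Hsz; rewrite sD sq ltnS => H.
  by apply: leq_trans H.
have [u1 [Hu1 Cu1]] := IH D1 Hsz1 HD1 HD10.
pose b := if u1.[- a] != 0 then a else - a.
have Hb : u1.[- b] != 0.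
  rewrite /b; case: ifP => //= /negbFE /eqP E; rewrite opprK.
  apply/negP => /eqP E2.
  have := coprimep_root Cu1 (_ : root u1 (- a)); rewrite pinv_horner opprK E2 eqxx.
  by move=> /(_ (introT eqP E)).
have b0 : b != 0 by rewrite /b; case: ifP => _ //; rewrite oppr_eq0.
have bb : b * b = a * a by rewrite /b; case: ifP => _ //; rewrite mulrNN.
exists (('X - b%:P) * u1); split.
  rewrite pinvM mulrACA Hu1 pinv_XsubC -scalerAr.
  have -> : ('X - b%:P) * ('X - (- b)%:P) = 'X^2 - (b * b)%:P.
    by rewrite polyCN opprK polyCM; ring.
  rewrite bb DK /D1 /K scaleN1r polyCN polyCM; ring.
rewrite pinvM pinv_XsubC -scalerAl coprimepZr ?oppr_eq0 ?oner_eq0 //.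
rewrite coprimepMl !coprimepMr Cu1 andbT.
rewrite !coprimep_XsubC [coprimep ('X - _) _]coprimep_sym coprimep_XsubC.
rewrite !rootE pinv_horner hornerXsubC Hb andbT.
rewrite andbT -opprD oppr_eq0; exact: two_neq0.
Qed.

Lemma exists_nonroot (F : closedFieldType) (B : {poly F}) : B != 0 -> exists c, B.[c] != 0.
Proof.
move=> B0; have : size (B * 'X - 1) != 1.
  have sB : size (B * 'X) = (size B).+1 by rewrite size_mulX.
  have sB1 : (0 < size B)%N by rewrite lt0n size_poly_eq0.
  rewrite size_addl sB; first by rewrite eqSS -lt0n.
  by rewrite size_opp size_poly1 ltnS.
case/closed_rootP => c; rewrite rootE hornerD hornerN hornerMX hornerC subr_eq0 => /eqP H.
by exists c; apply: contra_eq_neq H => ->; rewrite mul0r eq_sym oner_eq0.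
Qed.

Definition Qc (F : fieldType) (a e d : {poly F}) (c : F) := a * (c ^+ 2)%:P + e * c%:P + d.

Lemma choose_c_aux (F : closedFieldType) (a e d : {poly F}) :
  (2%:R : F) != 0 ->
  forall D : {poly F}, D != 0 ->
  (forall g, root D g -> ~~ [&& a.[g] == 0, e.[g] == 0 & d.[g] == 0]) ->
  exists B : {poly F}, B != 0 /\ forall c, B.[c] != 0 -> coprimep (Qc a e d c) D.
Proof.
move=> H2 D; move: {2}(size D) (leqnn (size D)) => n; elim: n D => [|n IH] D.
  by rewrite leqn0 size_poly_eq0 => /eqP ->; rewrite eqxx.
move=> Hsz D0 Hr.
have [/closed_rootP [g Hg] | /negPn s1] := boolP (size D != 1); last first.
  exists 1; split; first exact: oner_neq0.
  move=> c _; rewrite coprimep_sym (size1_polyC (_ : size D <= 1)%N) ?(eqP s1) //.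
  apply: coprimep_const; apply: contra_neq D0 => E.
  by rewrite (size1_polyC (_ : size D <= 1)%N) ?(eqP s1) // E.
case/factor_theorem: Hg (Hr g Hg) => D' DD' Hrg.
have D'0 : D' != 0 by apply: contra_neq D0 => E; rewrite DD' E mul0r.
have Xn (c : F) : 'X - c%:P != 0 by rewrite polyXsubC_eq0.
have HszD' : (size D' <= n)%N.
  by move: Hsz; rewrite DD' size_mul // size_XsubC addn2 ltnS.
have HrD' : forall g', root D' g' -> ~~ [&& a.[g'] == 0, e.[g'] == 0 & d.[g'] == 0].
  by move=> g' Hg'; apply: Hr; rewrite DD' rootE hornerM (eqP Hg') mul0r.
have [B' [B'0 HB']] := IH D' HszD' D'0 HrD'.
pose P := a.[g]%:P * 'X^2 + e.[g]%:P * 'X + d.[g]%:P.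
have HP c : P.[c] = a.[g] * c ^+ 2 + e.[g] * c + d.[g].
  by rewrite /P !hornerD !hornerCM hornerXn hornerX hornerC.
have HQ c : (Qc a e d c).[g] = a.[g] * c ^+ 2 + e.[g] * c + d.[g].
  by rewrite /Qc !hornerD !hornerM !hornerC.
have P0 : P != 0.
  apply: contra Hrg => /eqP P0.
  have h0 := HP 0; have h1 := HP 1; have hm := HP (-1).
  rewrite P0 !horner0 in h0 h1 hm.
  have Hd : d.[g] = 0 by rewrite [RHS]h0; ring.
  have h1' : a.[g] + e.[g] = 0 by rewrite [RHS]h1 Hd; ring.
  have hm' : a.[g] - e.[g] = 0 by rewrite [RHS]hm Hd; ring.
  have Ha : a.[g] + a.[g] = 0.
    by transitivity ((a.[g] + e.[g]) + (a.[g] - e.[g])); [ring|rewrite h1' hm' addr0].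
  have Ha0 : a.[g] = 0.
    by apply/eqP; apply: contraT => Hn; move: (two_neq0 H2 Hn); rewrite Ha eqxx.
  have He : e.[g] = 0 by rewrite -[LHS]add0r -{1}Ha0 h1'.
  by rewrite Ha0 He Hd eqxx.
exists (B' * P); split; first by rewrite mulf_neq0.
move=> c; rewrite hornerM mulf_eq0 negb_or => /andP [HB'c HPc].
rewrite DD' coprimepMr HB' //= coprimep_XsubC rootE HQ -HP //.
Qed.



Lemma size_aux (m k : nat) : (0 < m)%N -> (0 < k)%N -> m = (k + m).-1 -> k = 1%N.
Proof. lia. Qed.

Lemma iso_step (F : fieldType) (a b b' d u0 : {poly F}) :
  a != 0 -> polyinv a = - a -> polyinv d = - d -> b' = - polyinv b ->
  u0 * polyinv u0 = a * d - b * b' -> coprimep u0 (polyinv u0) ->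
  coprimep a (a * d - b * b') -> a * d - b * b' != 0 ->
  exists S : 'M[{poly F}]_2, S \in unitmx /\
    (mxstar S *m M2 a b b' d *m S) ord0 ord0 = 0 /\
    coprimep ((mxstar S *m M2 a b b' d *m S) ord0 ord_max)
             (polyinv ((mxstar S *m M2 a b b' d *m S) ord0 ord_max)).
Proof.
move=> a0 Ha Hd Hb' HD Cu CaD D0.
set D := a * d - b * b' in HD CaD D0.
have Cua : coprimep u0 a.
  by move: CaD; rewrite -HD coprimepMr coprimep_sym => /andP [].
case/Bezout_eq1_coprimepP: Cua => [[s r]] /= E1.
have E1' : polyinv s * polyinv u0 - polyinv r * a = 1.
  by move: (congr1 (@polyinv F) E1); rewrite pinvD !pinvM pinv1 Ha mulrN.
case/Bezout_eq1_coprimepP: CaD => [[k1 k2]] /= E2.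
pose y0 := 1 + polyinv b * polyinv s.
pose x0 := - r * b - u0 * polyinv r + d * polyinv s.
have Hx0 : a * x0 = u0 * polyinv y0 - b * y0.
  rewrite /y0 /x0 pinvD pinv1 pinvM !pinvK.
  have HDD : u0 * polyinv u0 - (a * d + b * polyinv b) = 0 by rewrite HD /D Hb'; ring.
  transitivity (u0 * polyinv y0 - b * y0 - b * (s * u0 + r * a - 1)
       + u0 * (polyinv s * polyinv u0 - polyinv r * a - 1) - polyinv s * (u0 * polyinv u0 - (a * d + b * polyinv b))).
    rewrite /y0 pinvD pinv1 pinvM !pinvK; ring.
  by rewrite E1 E1' HDD /y0 pinvD pinv1 pinvM !pinvK; ring.
have [w [Hy0 Hyc]] : exists w, y0 + a * w != 0 /\ coprimep (y0 + a * w) D.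
  pose w1 := k1 * (1 - y0).
  have C1 : forall z, coprimep (y0 + a * (w1 + D * z)) D.
    move=> z; apply/Bezout_eq1_coprimepP; exists (1, - (k2 * (y0 - 1) + a * z)) => /=.
    transitivity (y0 + (1 - y0) * (k1 * a + k2 * D)); first by rewrite /w1; ring.
    by rewrite E2 mulr1; ring.
  have [Hz | Hnz] := eqVneq (y0 + a * w1) 0.
    exists (w1 + D * 1); split; last exact: C1.
    rewrite mulrDr addrA Hz add0r mulr1 mulf_neq0 //.
  by exists w1; split => //; move: (C1 0); rewrite mulr0 addr0.
pose y := y0 + a * w; pose x := x0 - u0 * polyinv w - b * w.
have Hx : a * x = u0 * polyinv y - b * y.
  rewrite /x /y !mulrBr Hx0 [polyinv (y0 + _)]pinvD [polyinv (a * w)]pinvM Ha; ring.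
have HDD : u0 * polyinv u0 - (a * d + b * polyinv b) = 0 by rewrite HD /D Hb'; ring.
have Hy0' : y != 0 := Hy0.
have Hyc' : coprimep y D := Hyc.
clearbody x y.
have Hxs := congr1 (@polyinv F) Hx.
rewrite pinvM pinvB !pinvM pinvK Ha in Hxs.
have Ea : a * polyinv x = - (polyinv u0 * y - polyinv b * polyinv y) by rewrite -Hxs; ring.
have r1E : polyinv x * a + polyinv y * b' = - polyinv u0 * y.
  by rewrite Hb' mulrC Ea; ring.
have r2E : polyinv x * b + polyinv y * d = polyinv u0 * x.
  apply: (mulfI a0).
  transitivity (b * (a * polyinv x) + a * d * polyinv y); first by ring.
  rewrite Ea.
  transitivity (polyinv u0 * (u0 * polyinv y - b * y) - polyinv y * (u0 * polyinv u0 - (a * d + b * polyinv b))); first by ring.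
  by rewrite HDD mulr0 subr0 -Hx; ring.
pose g := gcdp x y.
have g0 : g != 0 by rewrite /g gcdp_eq0 negb_and Hy0' orbT.
pose x' := x %/ g; pose y' := y %/ g.
have Hxg : x = x' * g by rewrite /x' divpK // dvdp_gcdl.
have Hyg : y = y' * g by rewrite /y' divpK // dvdp_gcdr.
have Cxy : coprimep x' y' by apply: coprimep_div_gcd; rewrite Hy0' orbT.
have Cg : coprimep g D := coprimep_dvdr (dvdp_gcdr x y) Hyc'.
have HDe : polyinv D = D by rewrite -HD pinvM pinvK mulrC.
have Cgs : coprimep (polyinv g) (polyinv u0).
  by move: (coprimep_pinv Cg); rewrite HDe -HD coprimepMr => /andP [].
pose r1 := polyinv x' * a + polyinv y' * b'.
pose r2 := polyinv x' * b + polyinv y' * d.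
have R1 : polyinv g * r1 = - polyinv u0 * (y' * g).
  by rewrite -Hyg -r1E Hxg Hyg !pinvM /r1; ring.
have R2 : polyinv g * r2 = polyinv u0 * (x' * g).
  by rewrite -Hxg -r2E Hxg Hyg !pinvM /r2; ring.
case/Bezout_eq1_coprimepP: (Cxy) => [[s1 t1]] /= E3.
have Dg : polyinv g %| g.
  have d1 : polyinv g %| x' * g.
    by rewrite -(Gauss_dvdpr _ Cgs) -R2 dvdp_mulIl.
  have d2 : polyinv g %| y' * g.
    have := dvdp_mulIl (polyinv g) (- r1); rewrite mulrN R1 mulNr opprK => H.
    by rewrite -(Gauss_dvdpr _ Cgs).
  have Eg : g = s1 * (x' * g) + t1 * (y' * g).
    by transitivity ((s1 * x' + t1 * y') * g); [rewrite E3 mul1r | ring].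
  by rewrite {2}Eg; apply: dvdp_add; apply: dvdp_mull.
pose h := g %/ polyinv g.
have Hgh : g = h * polyinv g by rewrite /h divpK.
have pg0 : polyinv g != 0 by rewrite pinv_eq0.
have h0 : h != 0 by apply: contra_neq g0 => E; rewrite Hgh E mul0r.
have sh : size h = 1%N.
  have := size_mul h0 pg0; rewrite -Hgh size_pinv.
  have : (0 < size h)%N by rewrite lt0n size_poly_eq0.
  have : (0 < size g)%N by rewrite lt0n size_poly_eq0.
  move=> A1 A2 A3; exact: size_aux A1 A2 A3.
pose hc := h`_0.
have Hh : h = hc%:P by apply: size1_polyC; rewrite sh.
have hc0 : hc != 0 by move: h0; rewrite Hh polyC_eq0.
have r1' : r1 = - polyinv u0 * h * y'.
  by apply: (mulfI pg0); rewrite R1 {1}Hgh; ring.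
have r2' : r2 = polyinv u0 * h * x'.
  by apply: (mulfI pg0); rewrite R2 {1}Hgh; ring.
exists (M2 x' (- t1) y' s1); split.
  rewrite unitmxE det_M2 (_ : x' * s1 - - t1 * y' = s1 * x' + t1 * y'); last by ring.
  by rewrite E3 unitr1.
rewrite mxstarM2 !mulM2 !M2E; split.
  transitivity (r1 * x' + r2 * y'); first by rewrite /r1 /r2; ring.
  by rewrite r1' r2'; ring.
have -> : (polyinv x' * a + polyinv y' * b') * - t1 + (polyinv x' * b + polyinv y' * d) * s1
          = polyinv u0 * hc%:P.
  transitivity (r1 * - t1 + r2 * s1); first by rewrite /r1 /r2; ring.
  rewrite r1' r2' -Hh; transitivity (polyinv u0 * h * (s1 * x' + t1 * y')); first by ring.
  by rewrite E3 mulr1.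
rewrite pinvM pinvK pinvC coprimepMl !coprimepMr coprimep_sym Cu /=.
rewrite coprimep_sym coprimep_const //= !coprimep_const //.
Qed.



Lemma gcd_noroot (F : fieldType) (A : 'M[{poly F}]_2) g : gcd_mx A = 1 ->
  ~~ [&& root (A ord0 ord0) g, root (A ord0 ord_max) g, root (A ord_max ord0) g
       & root (A ord_max ord_max) g].
Proof.
move=> H; apply/negP => /and4P [r1 r2 r3 r4].
have : ('X - g%:P) %| gcd_mx A.
  rewrite /gcd_mx -mul_polyC; apply: dvdp_mull.
  rewrite !big_ord_recl !big_ord0.
  have E : lift ord0 ord0 = ord_max :> 'I_2 by apply: val_inj.
  by rewrite E !dvdp_gcd -!root_factor_theorem r1 r2 r3 r4 !root0.
by rewrite H dvdp1 size_XsubC.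
Qed.

Lemma odd0 (F : fieldType) (p : {poly F}) : (2%:R : F) != 0 -> polyinv p = - p -> p.[0] = 0.
Proof.
move=> H2 E; have := congr1 (horner^~ 0) E; rewrite /= pinv_horner oppr0 hornerN => h.
apply/eqP; apply: contraT => Hn; move: (two_neq0 H2 Hn).
by rewrite {1}h addNr eqxx.
Qed.

Lemma size_aux2 (k : nat) : (k + k).-1 = 1%N -> k = 1%N.
Proof. lia. Qed.

Definition zd (F : fieldType) (B : 'M[{poly F}]_2) :=
  B ord0 ord0 = 0 /\ B ord_max ord_max = 0.

Lemma compose (F : fieldType) (A S : 'M[{poly F}]_2) : S \in unitmx ->
  (exists T, T \in unitmx /\ zd (mxstar T *m (mxstar S *m A *m S) *m T)) ->
  exists T, T \in unitmx /\ zd (mxstar T *m A *m T).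
Proof.
move=> uS [T [uT HT]]; exists (S *m T); split; first by rewrite unitmx_mul uS.
by rewrite mxstarM !mulmxA; move: HT; rewrite !mulmxA.
Qed.

Lemma M2_entries (F : fieldType) (A : 'M[{poly F}]_2) (c : F) :
  mxstar (M2 c%:P 1 1 0) *m A *m M2 c%:P 1 1 0 =
  M2 ((A ord0 ord0 * c%:P + A ord_max ord0) * c%:P + (A ord0 ord_max * c%:P + A ord_max ord_max))
     (A ord0 ord0 * c%:P + A ord_max ord0)
     (A ord0 ord0 * c%:P + A ord0 ord_max) (A ord0 ord0).
Proof.
rewrite [A in LHS]M2_eta mxstarM2 pinvC pinv1 pinv0 !mulM2.
congr M2; ring.
Qed.

Theorem proposition3p3 (F : closedFieldType) (A : 'M[{poly F}]_2) :
  (2%:R : F) != 0 ->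
  skew_hermitian A ->
  \det A != 0 ->
  gcd_mx A = 1 ->
  exists S : 'M[{poly F}]_2,
    S \in unitmx /\
    (mxstar S *m A *m S) ord0 ord0 = 0 /\ (mxstar S *m A *m S) ord_max ord_max = 0.
Proof.
move=> H2 Hs HD Hg.
suff : exists T, T \in unitmx /\ zd (mxstar T *m A *m T) by [].
have Hnr := gcd_noroot (A := A) ^~ Hg.
have Ea := skewE Hs ord0 ord0.
have Ed := skewE Hs ord_max ord_max.
have Eb := skewE Hs ord0 ord_max.
have DE : \det A = A ord0 ord0 * A ord_max ord_max - A ord0 ord_max * A ord_max ord0.
  by rewrite {1}[A]M2_eta det_M2.
move: Hnr Ea Ed Eb HD DE.
set a := A ord0 ord0; set b := A ord0 ord_max; set b' := A ord_max ord0.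
set d := A ord_max ord_max; set D := \det A.
move=> Hnr Ea Ed Eb HD DE.
have Hb' : b' = - polyinv b by rewrite -pinvN -Eb pinvK.
have Hroots : forall g, root D g -> ~~ [&& a.[g] == 0, (b + b').[g] == 0 & d.[g] == 0].
  move=> g Hgr; apply/negP => /and3P [/eqP ha /eqP he /eqP hd].
  have hb' : b'.[g] = - b.[g] by apply/eqP; rewrite -addr_eq0 addrC -hornerD he.
  have hb : b.[g] = 0.
    move: Hgr; rewrite rootE DE hornerD hornerN !hornerM ha hd hb' mul0r sub0r mulrN opprK.
    by rewrite mulf_eq0 orbb => /eqP.
  move: (Hnr g); rewrite !rootE ha hd hb' hb oppr0 eqxx.
  by [].
have [B [B0 HB]] := choose_c_aux H2 HD Hroots.
have [c Hc] := exists_nonroot B0.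
have Cc := HB c Hc.
have uS0 : M2 c%:P 1 1 0 \in unitmx.
  by rewrite unitmxE det_M2 mulr0 mul1r sub0r unitrN unitr1.
apply: (compose uS0).
rewrite M2_entries -/a -/b -/b' -/d.
set a0 := (a * c%:P + b') * c%:P + (b * c%:P + d).
set b0 := a * c%:P + b'; set b0' := a * c%:P + b.
have Ha0 : a0 = Qc a (b + b') d c by rewrite /a0 /Qc polyC_exp; ring.
have HsA0 : skew_hermitian (M2 a0 b0 b0' a).
  by rewrite -[M2 _ _ _ _](M2_entries A c); apply: skew_cong.
have Hdet0 : a0 * a - b0 * b0' = D.
  by rewrite DE /a0 /b0 /b0' Hb'; ring.
have Ea0 := skewE HsA0 ord0 ord0; rewrite !M2E in Ea0.
have Eb0 := skewE HsA0 ord0 ord_max; rewrite !M2E in Eb0.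
have Hb0' : b0' = - polyinv b0 by rewrite -pinvN -Eb0 pinvK.
rewrite -Ha0 -Hdet0 in Cc.
have [Z | Z] := eqVneq a0 0.
  apply: final_step => //; rewrite ?M2E //.
  move: Cc; rewrite Z coprime0p => /eqp_size; rewrite size_poly1 => sD.
  move: sD; rewrite mul0r sub0r Hb0' mulrN opprK => sD.
  have b00 : b0 != 0 by apply/eqP => E; move: sD; rewrite E mul0r size_poly0.
  have pb00 : polyinv b0 != 0 by rewrite pinv_eq0.
  move: sD; rewrite size_mul // size_pinv => sD.
  have sb : size b0 = 1%N by apply: size_aux2.
  rewrite (size1_polyC (_ : size b0 <= 1)%N) ?sb //.
  apply: coprimep_const; rewrite (_ : b0`_0 = lead_coef b0) ?lead_coef_eq0 // lead_coefE sb.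
  by [].
have HDe : polyinv D = D.
  by rewrite DE pinvB !pinvM Ea Ed Hb' pinvN pinvK; ring.
have HD0 : D.[0] != 0.
  have ha := odd0 H2 Ea; have hd := odd0 H2 Ed.
  have hb' : b'.[0] = - b.[0] by rewrite Hb' hornerN pinv_horner oppr0.
  rewrite DE hornerD hornerN !hornerM ha hd hb' mul0r sub0r mulrN opprK.
  apply/negP; rewrite mulf_eq0 orbb => /eqP hb.
  move: (Hnr 0); rewrite !rootE ha hd hb' hb oppr0 eqxx.
  by [].
have [u0 [Hu0 Cu0]] := halving H2 HDe HD0.
rewrite -Hdet0 in Hu0 HD.
have [S1 [uS1 [H00 C01]]] := iso_step Z Ea0 Ea Hb0' Hu0 Cu0 Cc HD.
apply: (compose uS1).
apply: final_step => //.
exact: skew_cong.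
Qed.
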